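(* Let $n\in\mathbb N$. (a) Suppose that for every finite set $I$ we are given a covariant $n$-tensor field $\tilde\Theta^n_I$ on $\mathcal M_+(I)$. Then $(\tilde\Theta^n_I)$ is a congruent family if and only if there are functions $a_{\mathbf P}:(0,\infty)\to\mathbb R$, $\mathbf P$ ranging over all partitions of $\{1,\dots,n\}$, such that $(\tilde\Theta^n_I)_\mu=\sum_{\mathbf P}a_{\mathbf P}(\|\mu\|)(\tau^{\mathbf P}_I)_\mu$ for all finite $I$ and $\mu\in\mathcal M_+(I)$. (b) Suppose that for every finite set $I$ we are given a covariant $n$-tensor field $\Theta^n_I$ on $\mathcal P_+(I)$. Then $(\Theta^n_I)$ is a congruent family if and only if there are constants $c_{\mathbf P}\in\mathbb R$, $\mathbf P=\{P_1,\dots,P_l\}$ ranging over the partitions of $\{1,\dots,n\}$ with $|P_i|>1$ for all $i$, such that $\Theta^n_I=\sum_{\mathbf P}c_{\mathbf P}\,\tau^{\mathbf P}_I|_{\mathcal P_+(I)}$ for all finite $I$.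
   Context: For a finite set $I$, $\mathcal S(I)=\{\sum_{i\in I}x_i\delta_i:x_i\in\mathbb R\}$ (signed measures), $\|\sum x_i\delta_i\|=\sum|x_i|$, $\mathcal M_+(I)=\{\sum\mu_i\delta_i:\mu_i>0\}$ (open in $\mathcal S(I)$, tangent space $\mathcal S(I)$), $\mathcal P_+(I)=\{\mu\in\mathcal M_+(I):\sum\mu_i=1\}$ (tangent space $\mathcal S_0(I)=\{\sum x_i\delta_i:\sum x_i=0\}$). A covariant $n$-tensor field is a continuously varying family of $n$-multilinear forms on the tangent spaces. For $\mu=\sum\mu_i\delta_i\in\mathcal M_+(I)$ and $V_k=\sum_iV_k^i\delta_i$, the canonical tensor is $(\tau^m_I)_\mu(V_1,\dots,V_m)=\sum_{i\in I}\mu_i^{1-m}V_1^i\cdots V_m^i$; for a partition $\mathbf P=\{P_1,\dots,P_l\}$ of $\{1,\dots,n\}$, $(\tau^{\mathbf P}_I)_\mu(V_1,\dots,V_n)=\prod_{i=1}^l(\tau^{|P_i|}_I)_\mu((V_j)_{j\in P_i})$. A Markov kernel $K:I\to\mathcal P(I')$ between finite sets is given by $K(i)=\sum_{i'}K^i_{i'}\delta_{i'}$ with $K^i_{i'}\ge0$, $\sum_{i'}K^i_{i'}=1$, and $K_*(\sum x_i\delta_i)=\sum_{i,i'}K^i_{i'}x_i\delta_{i'}$; it is congruent if there is a map $\kappa:I'\to I$ with $K^i_{i'}=0$ whenever $\kappa(i')\ne i$. The family $(\tilde\Theta^n_I)$ is congruent if $K^*\tilde\Theta^n_{I'}=\tilde\Theta^n_I$,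 i.e. $(\tilde\Theta^n_{I'})_{K_*\mu}(K_*V_1,\dots,K_*V_n)=(\tilde\Theta^n_I)_\mu(V_1,\dots,V_n)$, for every congruent Markov kernel $K:I\to\mathcal P(I')$ between finite sets for which $K_*$ maps $\mathcal M_+(I)$ into $\mathcal M_+(I')$ (so that the pullback is defined); analogously on $\mathcal P_+(I)$ with tangent vectors in $\mathcal S_0(I)$. *)

(* Defs.v *)
From HB Require Import structures.
From mathcomp Require Import all_boot all_order all_algebra.
From mathcomp Require Import reals.
Set Implicit Arguments. Unset Strict Implicit. Unset Printing Implicit Defensive.
Import Order.TTheory GRing.Theory Num.Theory.
Local Open Scope ring_scope.

Section Defs.
Variable R : realType.

(* Elements of S(I) are represented as coefficient functions I -> R. *)
Definition Mplus (I : finType) (mu : I -> R) : Prop := forall i, 0 < mu i.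
Definition Pplus (I : finType) (mu : I -> R) : Prop :=
  Mplus mu /\ \sum_(i : I) mu i = 1.
Definition S0 (I : finType) (x : I -> R) : Prop := \sum_(i : I) x i = 0.
Definition anyvec (I : finType) (x : I -> R) : Prop := True.
Definition mnorm (I : finType) (mu : I -> R) : R := \sum_(i : I) `|mu i|.

Definition upd (n : nat) (I : finType) (V : 'I_n -> I -> R) (k : 'I_n)
  (x : I -> R) : 'I_n -> I -> R := fun j => if j == k then x else V j.

(* A covariant n-tensor field on the domain D (subset of S(I)) with tangent
   space T (subspace of S(I)): a map mu |-> Th mu, where Th mu is an
   n-multilinear form on T, varying continuously with mu in D. *)
Definition tensor_field (n : nat) (I : finType) (D T : (I -> R) -> Prop)
  (Th : (I -> R) -> ('I_n -> I -> R) -> R) : Prop :=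
  (forall mu, D mu -> forall V, (forall j, T (V j)) ->
     forall (k : 'I_n) (a : R) (x y : I -> R), T x -> T y ->
     Th mu (upd V k (fun i => a * x i + y i))
       = a * Th mu (upd V k x) + Th mu (upd V k y))
  /\
  (forall V, (forall j, T (V j)) -> forall mu, D mu ->
     forall eps : R, 0 < eps -> exists2 delta : R, 0 < delta &
       forall nu, D nu -> (forall i, `|nu i - mu i| < delta) ->
         `|Th nu V - Th mu V| < eps).

(* Markov kernels K(i) = sum_i' K i i' delta_i' and congruence *)
Definition markov_kernel (I I' : finType) (K : I -> I' -> R) : Prop :=
  (forall i i', 0 <= K i i') /\ (forall i, \sum_(i' : I') K i i' = 1).
Definition congruent_kernel (I I' : finType) (K : I -> I' -> R) : Prop :=
  markov_kernel K /\
  exists kappa : I' -> I, forall i i', kappa i' != i -> K i i' = 0.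
Definition pushK (I I' : finType) (K : I -> I' -> R) (x : I -> R) : I' -> R :=
  fun i' => \sum_(i : I) K i i' * x i.

Definition congruent_family (n : nat)
  (D : forall I : finType, (I -> R) -> Prop)
  (T : forall I : finType, (I -> R) -> Prop)
  (Th : forall I : finType, (I -> R) -> ('I_n -> I -> R) -> R) : Prop :=
  forall (I I' : finType), (0 < #|I|)%N -> (0 < #|I'|)%N ->
  forall K : I -> I' -> R, congruent_kernel K ->
  (forall mu, D I mu -> D I' (pushK K mu)) ->
  forall mu, D I mu -> forall V : 'I_n -> I -> R, (forall j, T I (V j)) ->
    Th I' (pushK K mu) (fun j => pushK K (V j)) = Th I mu V.

Definition tau_block (n : nat) (I : finType) (B : {set 'I_n}) (mu : I -> R)
  (V : 'I_n -> I -> R) : R :=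
  \sum_(i : I) mu i ^ (1 - (#|B|%:Z)) * \prod_(j in B) V j i.
Definition tauP (n : nat) (I : finType) (P : {set {set 'I_n}}) (mu : I -> R)
  (V : 'I_n -> I -> R) : R :=
  \prod_(B in P) tau_block B mu V.

End Defs.

(* Main.v *)
Require Import Defs.
From HB Require Import structures.
From mathcomp Require Import all_boot all_order all_algebra.
From mathcomp Require Import reals.
From mathcomp Require Import ring lra.
From Stdlib Require Import FunctionalExtensionality IndefiniteDescription.
Set Implicit Arguments. Unset Strict Implicit. Unset Printing Implicit Defensive.
Import Order.TTheory GRing.Theory Num.Theory.
Local Open Scope ring_scope.
Section PartA.
Variable R : realType.
Variable n : nat.

Definition dlt (I : finType) (i : I) : I -> R := fun i' => (i' == i)%:R.

Definition mlin (I : finType) (T : (I -> R) -> Prop) (F : ('I_n -> I -> R) -> R) :=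
  forall V, (forall j, T (V j)) -> forall (k : 'I_n) (a : R) (x y : I -> R), T x -> T y ->
     F (upd V k (fun i => a * x i + y i)) = a * F (upd V k x) + F (upd V k y).

Definition Tclosed (I : finType) (T : (I -> R) -> Prop) :=
  T (fun _ => 0) /\ forall a x y, T x -> T y -> T (fun i => a * x i + y i).

Lemma upd_T (I : finType) (T : (I -> R) -> Prop) (V : 'I_n -> I -> R) (k : 'I_n) (x : I -> R) :
  (forall j, T (V j)) -> T x -> forall j, T (upd V k x j).
Proof. by move=> HV Hx j; rewrite /upd; case: eqP. Qed.

Lemma mlin_sum (I J : finType) (T : (I -> R) -> Prop) F (V : 'I_n -> I -> R) (k : 'I_n) (c : J -> R) (E : J -> I -> R) :
  mlin T F -> Tclosed T -> (forall j, T (V j)) -> (forall r, T (E r)) ->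
  F (upd V k (fun i => \sum_(r : J) c r * E r i)) = \sum_(r : J) c r * F (upd V k (E r)).
Proof.
move=> HF [T0 TC] HV HE.
suff H : forall s : seq J, T (fun i => \sum_(r <- s) c r * E r i) /\
   F (upd V k (fun i => \sum_(r <- s) c r * E r i)) = \sum_(r <- s) c r * F (upd V k (E r)).
  exact: (H _).2.
elim=> [|r s [IH1 IH2]].
  have -> : (fun i : I => \sum_(r <- [::]) c r * E r i) = (fun _ => 0).
    by apply: functional_extensionality => i; rewrite big_nil.
  split => //; rewrite big_nil.
  have := HF V HV k 1 _ _ T0 T0.
  have -> : (fun i : I => 1 * 0 + 0) = (fun _ => 0 : R).
    by apply: functional_extensionality => i; rewrite mulr0 addr0.
  move=> h; lra.
have -> : (fun i : I => \sum_(r0 <- r :: s) c r0 * E r0 i) =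
   (fun i => c r * E r i + \sum_(r0 <- s) c r0 * E r0 i).
  by apply: functional_extensionality => i; rewrite big_cons.
split; first exact: TC.
by rewrite big_cons HF // IH2.
Qed.

Lemma basis_agree (I : finType) (i0 : I) (F G : ('I_n -> I -> R) -> R) :
  mlin (@anyvec R I) F -> mlin (@anyvec R I) G ->
  (forall x : 'I_n -> I, F (fun j => dlt (x j)) = G (fun j => dlt (x j))) ->
  forall V, F V = G V.
Proof.
move=> HF HG HFG.
have TC : Tclosed (@anyvec R I) by split.
suff H: forall m V (x : 'I_n -> I), (forall j : 'I_n, (m <= j)%N -> V j = dlt (x j)) -> F V = G V.
  by move=> V; apply: (H n V (fun _ => i0)) => j; rewrite leqNgt ltn_ord.
elim=> [|m IH] V x Hx.
  have -> : V = fun j => dlt (x j) by apply: functional_extensionality => j; apply: Hx.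
  exact: HFG.
case: (ltnP m n) => [mn|nm]; last first.
  apply: (IH V x) => j mj; exfalso.
  by have := leq_trans (ltn_ord j) nm; rewrite ltnNge mj.
set k := Ordinal mn.
have eV : V = upd V k (fun i => \sum_r V k r * dlt r i).
  apply: functional_extensionality => j; rewrite /upd; case: eqP => [->|//].
  apply: functional_extensionality => i; rewrite (bigD1 i) //= /dlt eqxx mulr1.
  rewrite big1 ?addr0 // => r /negbTE; rewrite eq_sym => ->; by rewrite mulr0.
rewrite eV !(mlin_sum (T:=@anyvec R I)) //; apply: eq_bigr => r _; congr (_ * _).
apply: (IH _ (fun j => if j == k then r else x j)) => j mj; rewrite /upd.
case: (eqVneq j k) => [//|njk]; apply: Hx; rewrite ltn_neqAle mj andbT.
apply: contra njk => /eqP e; apply/eqP/val_inj => /=; by rewrite e.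
Qed.

Lemma tau_block_upd_out (I : finType) (B : {set 'I_n}) (mu : I -> R) (V : 'I_n -> I -> R) (k : 'I_n) (w : I -> R) :
  k \notin B -> tau_block B mu (upd V k w) = tau_block B mu V.
Proof.
move=> kB; rewrite /tau_block; apply: eq_bigr => i _; congr (_ * _).
apply: eq_bigr => j jB; rewrite /upd.
have nk : j != k by apply: contraNneq kB => <-.
by rewrite (negbTE nk).
Qed.

Lemma tau_block_lin (I : finType) (B : {set 'I_n}) (mu : I -> R) (V : 'I_n -> I -> R) (k : 'I_n) (a : R) (x y : I -> R) :
  k \in B -> tau_block B mu (upd V k (fun i => a * x i + y i))
     = a * tau_block B mu (upd V k x) + tau_block B mu (upd V k y).
Proof.
move=> kB; rewrite /tau_block mulr_sumr -big_split; apply: eq_bigr => i _.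
rewrite !(bigD1 k kB) /= /upd eqxx.
have e : forall w, \prod_(j in B | j != k) (if j == k then w else V j) i
              = \prod_(j in B | j != k) V j i.
  by move=> w; apply: eq_bigr => j /andP[_ /negbTE ->].
rewrite !e; ring.
Qed.

Lemma tauP_lin (I : finType) (P : {set {set 'I_n}}) (mu : I -> R) :
  partition P [set: 'I_n] -> mlin (@anyvec R I) (tauP P mu).
Proof.
move=> HP V _ k a x y _ _.
have /and3P[/eqP Pc PtI P0] := HP.
have kc : k \in cover P by rewrite Pc inE.
set B0 := pblock P k.
have B0P : B0 \in P by apply: pblock_mem.
have kB0 : k \in B0 by rewrite mem_pblock.
rewrite /tauP !(bigD1 B0 B0P) /=.
have e : forall w, \prod_(B in P | B != B0) tau_block B mu (upd V k w)
             = \prod_(B in P | B != B0) tau_block B mu V.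
  move=> w; apply: eq_bigr => B /andP[BP nB]; apply: tau_block_upd_out.
  apply/negP => kB; move/eqP: nB; apply; rewrite /B0.
  by rewrite (def_pblock PtI BP kB).
rewrite !e tau_block_lin //; ring.
Qed.

Lemma sum_tauP_lin (I : finType) (b : {set {set 'I_n}} -> R) (mu : I -> R) :
  mlin (@anyvec R I) (fun V => \sum_(P | partition P [set: 'I_n]) b P * tauP P mu V).
Proof.
move=> V HV k a x y Hx Hy; rewrite mulr_sumr -big_split; apply: eq_bigr => P HP.
by rewrite (@tauP_lin _ P mu HP V HV k a x y Hx Hy) mulrDr mulrCA.
Qed.

Lemma pushK_kappa (I I' : finType) (K : I -> I' -> R) (kappa : I' -> I) (x : I -> R) (i' : I') :
  (forall i i', kappa i' != i -> K i i' = 0) ->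
  pushK K x i' = K (kappa i') i' * x (kappa i').
Proof.
move=> Hk; rewrite /pushK (bigD1 (kappa i')) //= big1 ?addr0 // => i ni.
by rewrite Hk ?mul0r // eq_sym.
Qed.

Lemma sum_pushK (I I' : finType) (K : I -> I' -> R) (x : I -> R) :
  markov_kernel K -> \sum_i' pushK K x i' = \sum_i x i.
Proof.
move=> [_ HK]; rewrite /pushK exchange_big /=; apply: eq_bigr => i _.
by rewrite -mulr_suml HK mul1r.
Qed.

Lemma pushK_ge0 (I I' : finType) (K : I -> I' -> R) (x : I -> R) (i' : I') :
  markov_kernel K -> (forall i, 0 <= x i) -> 0 <= pushK K x i'.
Proof.
move=> [HK _] Hx; apply: sumr_ge0 => i _; exact: mulr_ge0.
Qed.

Lemma mnorm_pushK (I I' : finType) (K : I -> I' -> R) (mu : I -> R) :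
  markov_kernel K -> Mplus mu -> mnorm (pushK K mu) = mnorm mu.
Proof.
move=> HK Hmu; rewrite /mnorm.
rewrite (eq_bigr (fun i' => pushK K mu i')); last first.
  by move=> i' _; rewrite ger0_norm // pushK_ge0 // => i; apply: ltW.
rewrite sum_pushK //; apply: eq_bigr => i _; rewrite ger0_norm //; exact: ltW.
Qed.

Lemma tau_block_cong (I I' : finType) (K : I -> I' -> R) (kappa : I' -> I) (mu : I -> R) (V : 'I_n -> I -> R) (B : {set 'I_n}) :
  markov_kernel K -> (forall i i', kappa i' != i -> K i i' = 0) ->
  (forall i', 0 < pushK K mu i') ->
  tau_block B (pushK K mu) (fun j => pushK K (V j)) = tau_block B mu V.
Proof.
move=> HK Hk Hpos; rewrite /tau_block.
set f := fun i => mu i ^ (1 - #|B|%:Z) * \prod_(j in B) V j i.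
transitivity (\sum_i' pushK K f i'); last by rewrite sum_pushK.
apply: eq_bigr => i' _; rewrite !(pushK_kappa _ _ Hk).
set k := K (kappa i') i'.
have k0 : k != 0.
  apply/eqP => k0; have := Hpos i'; rewrite (pushK_kappa _ _ Hk) -/k k0 mul0r ltxx //.
rewrite (eq_bigr (fun j => k * V j (kappa i'))); last by move=> j _; rewrite (pushK_kappa _ _ Hk).
rewrite big_split /= prodr_const expfzMl /f.
have -> : k ^+ #|B| = k ^ (#|B|%:Z) by [].
have e : k ^ (1 - #|B|%:Z) * k ^ (#|B|%:Z) = k.
  by rewrite -expfzDr // subrK expr1z.
rewrite /f /=; set z := (1 - #|B|%:Z); set u := mu (kappa i') ^ z.
set p := \prod_(j in B) V j (kappa i').
rewrite -[in RHS]e; ring.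
Qed.

Lemma tauP_cong (I I' : finType) (K : I -> I' -> R) (kappa : I' -> I) (mu : I -> R) (V : 'I_n -> I -> R) (P : {set {set 'I_n}}) :
  markov_kernel K -> (forall i i', kappa i' != i -> K i i' = 0) ->
  (forall i', 0 < pushK K mu i') ->
  tauP P (pushK K mu) (fun j => pushK K (V j)) = tauP P mu V.
Proof.
move=> HK Hk Hpos; apply: eq_bigr => B _; exact: (@tau_block_cong _ _ K kappa mu V B HK Hk Hpos).
Qed.

End PartA.
Arguments dlt {R I} i _.
Section PartC.
Variable R : realType.
Variable n : nat.

Definition pairs (P : {set {set 'I_n}}) : {set 'I_n * 'I_n} :=
  [set jk | [exists B in P, (jk.1 \in B) && (jk.2 \in B)]].
Definition refines (P Q : {set {set 'I_n}}) := pairs P \subset pairs Q.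
Definition constB (Z : eqType) (B : {set 'I_n}) (x : 'I_n -> Z) :=
  [forall j in B, [forall k in B, x j == x k]].
Definition constP (Z : eqType) (P : {set {set 'I_n}}) (x : 'I_n -> Z) :=
  [forall B in P, constB B x].

Lemma pairs_pblock (P : {set {set 'I_n}}) j k :
  partition P [set: 'I_n] -> ((j, k) \in pairs P) = (k \in pblock P j).
Proof.
move=> /and3P[/eqP Pc tI _].
have jc : j \in cover P by rewrite Pc inE.
rewrite inE /=; apply/existsP/idP.
  by case=> B /and3P[BP jB kB]; rewrite (def_pblock tI BP jB).
move=> kB; exists (pblock P j); rewrite pblock_mem // mem_pblock jc kB.
done.
Qed.

Lemma constP_refines (Z : eqType) (P Q : {set {set 'I_n}}) (x : 'I_n -> Z) :
  (forall j k, ((j, k) \in pairs Q) = (x j == x k)) -> constP P x = refines P Q.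
Proof.
move=> HQ; apply/idP/idP.
  move=> /forallP HP; apply/subsetP => [[j k]]; rewrite inE /= => /existsP[B /and3P[BP jB kB]].
  have := HP B; rewrite BP /= => /forallP /(_ j); rewrite jB /= => /forallP /(_ k).
  by rewrite kB /= HQ.
move=> /subsetP HPQ; apply/forallP => B; apply/implyP => BP.
apply/forallP => j; apply/implyP => jB; apply/forallP => k; apply/implyP => kB.
rewrite -HQ; apply: HPQ; rewrite inE /=; apply/existsP; exists B; rewrite BP jB kB.
done.
Qed.

Lemma pairs_sub (P Q : {set {set 'I_n}}) :
  partition P [set: 'I_n] -> partition Q [set: 'I_n] -> pairs P = pairs Q -> P \subset Q.
Proof.
move=> HP HQ e; apply/subsetP => B BP.
have /and3P[/eqP Pc tIP P0] := HP.
have /and3P[/eqP Qc tIQ Q0] := HQ.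
have : B != set0 by apply: contraNneq P0 => <-.
case/set0Pn => j jB.
have jc : j \in cover Q by rewrite Qc inE.
suff -> : B = pblock Q j by apply: pblock_mem.
apply/setP => k.
rewrite -(pairs_pblock _ _ HQ) -e (pairs_pblock _ _ HP) (def_pblock tIP BP jB).
done.
Qed.

Lemma pairs_inj (P Q : {set {set 'I_n}}) :
  partition P [set: 'I_n] -> partition Q [set: 'I_n] -> pairs P = pairs Q -> P = Q.
Proof.
move=> HP HQ e; apply/eqP; rewrite eqEsubset (pairs_sub HP HQ e).
by rewrite (pairs_sub HQ HP (esym e)).
Qed.

Lemma card_pairs_lt (P Q : {set {set 'I_n}}) :
  partition P [set: 'I_n] -> partition Q [set: 'I_n] -> refines P Q -> P != Q ->
  (#|pairs P| < #|pairs Q|)%N.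
Proof.
move=> HP HQ HPQ nPQ; rewrite ltnNge; apply: contra nPQ => le.
have /eqP e : pairs P == pairs Q by rewrite eqEcard le andbT; exact: HPQ.
by apply/eqP; apply: pairs_inj.
Qed.

Lemma tri_uniq (w u : {set {set 'I_n}} -> R) :
  (forall P, partition P [set: 'I_n] -> w P != 0) ->
  (forall Q, partition Q [set: 'I_n] ->
     \sum_(P | partition P [set: 'I_n]) u P * w P * (refines P Q)%:R = 0) ->
  forall P, partition P [set: 'I_n] -> u P = 0.
Proof.
move=> Hw Hs.
suff H : forall m P, (#|pairs P| < m)%N -> partition P [set: 'I_n] -> u P = 0.
  by move=> P; apply: (H (#|pairs P|).+1).
elim=> [//|m IH] P lt HP.
have := Hs P HP; rewrite (bigD1 P) //= big1 ?addr0.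
  rewrite /refines subxx mulr1 => /eqP; rewrite mulf_eq0 (negbTE (Hw P HP)) orbF.
  by move/eqP.
move=> P' /andP[HP' nP']; case: (boolP (refines P' P)) => r; last by rewrite mulr0.
rewrite (IH P') ?mul0r //; apply: leq_trans (card_pairs_lt HP' HP r nP') _.
done.
Qed.

Definition coefA (w : {set {set 'I_n}} -> R) (P Q : {set {set 'I_n}}) : R :=
  if partition P [set: 'I_n] && partition Q [set: 'I_n] then w P * (refines P Q)%:R
  else (P == Q)%:R.

Local Notation T := {set {set 'I_n}}.

Lemma sum_enum_val (F : T -> R) : \sum_(i < #|T|) F (enum_val i) = \sum_(P : T) F P.
Proof.
rewrite (reindex enum_rank) /=; last first.
  by apply: onW_bij; apply: enum_rank_bij.
by apply: eq_bigr => P _; rewrite enum_rankK.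
Qed.

Lemma coefA_col (w : T -> R) (u : T -> R) Q :
  \sum_(P : T) u P * coefA w P Q =
  if partition Q [set: 'I_n] then \sum_(P | partition P [set: 'I_n]) u P * w P * (refines P Q)%:R
  else u Q.
Proof.
rewrite /coefA; case: (boolP (partition Q _)) => HQ.
  rewrite (bigID (fun P => partition P [set: 'I_n])) /= [X in _ + X]big1 ?addr0.
    by apply: eq_bigr => P HP; rewrite HP mulrA.
  move=> P nP; rewrite (negbTE nP) /=.
  have -> : (P == Q) = false by apply: contraNF nP => /eqP ->.
  by rewrite mulr0.
rewrite (bigD1 Q) //= big1 ?addr0; first by rewrite andbF eqxx mulr1.
by move=> P nP; rewrite andbF (negbTE nP) mulr0.
Qed.

Lemma tri_exists (w g : T -> R) :
  (forall P, partition P [set: 'I_n] -> w P != 0) ->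
  exists b : T -> R, forall Q, partition Q [set: 'I_n] ->
     \sum_(P | partition P [set: 'I_n]) b P * w P * (refines P Q)%:R = g Q.
Proof.
move=> Hw.
pose A : 'M[R]_#|T| := \matrix_(i, j) coefA w (enum_val i) (enum_val j).
have colE : forall (v : 'rV[R]_#|T|) Q,
    (v *m A) 0 (enum_rank Q) = \sum_(P : T) v 0 (enum_rank P) * coefA w P Q.
  move=> v Q; rewrite !mxE -(sum_enum_val (fun P => v 0 (enum_rank P) * coefA w P Q)).
  by apply: eq_bigr => i _; rewrite mxE enum_rankK enum_valK.
have Ainj : forall v : 'rV[R]_#|T|, v *m A = 0 -> v = 0.
  move=> v vA.
  have H0 : forall Q, \sum_(P : T) v 0 (enum_rank P) * coefA w P Q = 0.
    by move=> Q; rewrite -colE vA mxE.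
  have Hp := tri_uniq (u := fun P => v 0 (enum_rank P)) Hw.
  have Hall : forall P, v 0 (enum_rank P) = 0.
    move=> P; case: (boolP (partition P [set: 'I_n])) => HP.
      apply: Hp => // Q HQ; have := H0 Q; by rewrite coefA_col HQ.
    by have := H0 P; rewrite coefA_col (negbTE HP).
  apply/rowP => i; rewrite [RHS]mxE -[i]enum_valK; exact: Hall.
have Au : A \in unitmx by rewrite -row_free_unit; apply: inj_row_free.
pose gr : 'rV[R]_#|T| := \row_j (if partition (enum_val j) [set: 'I_n] then g (enum_val j) else 0).
pose br := gr *m invmx A.
have bA : br *m A = gr by rewrite /br mulmxKV.
exists (fun P => br 0 (enum_rank P)) => Q HQ.
have := colE br Q; rewrite bA coefA_col HQ mxE enum_rankK HQ.
by move=> <-.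
Qed.

Lemma inj_ext (Z : finType) (A : {set Z}) (h : Z -> Z) :
  {in A &, injective h} -> exists s : Z -> Z, injective s /\ {in A, s =1 h}.
Proof.
move=> hinj.
set B := h @: A.
have cAB : #|~: A| = #|~: B|.
  have := cardsC A; have := cardsC B; rewrite card_in_imset //.
  by move=> e1 e2; apply/eqP; rewrite -(eqn_add2l #|A|) e2 e1.
pose s z := if z \in A then h z else nth z (enum (~: B)) (index z (enum (~: A))).
have sout : forall z, z \notin A ->
   (index z (enum (~: A)) < size (enum (~: B)))%N /\ s z \in ~: B.
  move=> z zA; rewrite /s (negbTE zA).
  have lt : (index z (enum (~: A)) < size (enum (~: B)))%N.
    by rewrite -!cardE -cAB cardE index_mem mem_enum inE.
  by split=> //; rewrite -mem_enum mem_nth.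
exists s; split; last by move=> z zA; rewrite /s zA.
move=> z1 z2.
case: (boolP (z1 \in A)) => h1; case: (boolP (z2 \in A)) => h2.
- by rewrite /s h1 h2; apply: hinj.
- move=> e; have [_] := sout z2 h2; rewrite -e /s h1 inE.
  by rewrite (imset_f h h1).
- move=> e; have [_] := sout z1 h1; rewrite e /s h2 inE.
  by rewrite (imset_f h h2).
- have [l1 _] := sout z1 h1; have [l2 _] := sout z2 h2.
  rewrite /s (negbTE h1) (negbTE h2) (set_nth_default z1 z2 l2) => /eqP.
  rewrite nth_uniq ?enum_uniq // => /eqP ei.
  have m1 : z1 \in enum (~: A) by rewrite mem_enum inE.
  have m2 : z2 \in enum (~: A) by rewrite mem_enum inE.
  by rewrite -(nth_index z1 m1) ei (set_nth_default z2 z1) ?index_mem // nth_index.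
Qed.

Lemma perm_kernel (Z : finType) (x y : 'I_n -> Z) :
  (forall j k, (x j == x k) = (y j == y k)) ->
  exists s : Z -> Z, injective s /\ forall j, s (x j) = y j.
Proof.
move=> Hxy.
pose h z := if [pick j | x j == z] is Some j then y j else z.
have hx : forall j, h (x j) = y j.
  move=> j; rewrite /h; case: pickP => [j' /eqP e|].
    by apply/eqP; rewrite -Hxy e.
  by move/(_ j); rewrite eqxx.
have : {in [set x j | j : 'I_n] &, injective h}.
  move=> _ _ /imsetP[j1 _ ->] /imsetP[j2 _ ->]; rewrite !hx => e.
  by apply/eqP; rewrite Hxy e.
case/inj_ext => s [sinj sh]; exists s; split => // j.
by rewrite sh ?hx // imset_f.
Qed.

End PartC.
Section PartD.
Variable R : realType.
Variable n : nat.
Variable Th : forall I : finType, (I -> R) -> ('I_n -> I -> R) -> R.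
Arguments Th : clear implicits.
Hypothesis Htf : forall I : finType, (0 < #|I|)%N ->
        tensor_field (@Mplus R I) (@anyvec R I) (Th I).
Hypothesis Hcong : congruent_family (@Mplus R) (@anyvec R) Th.

Definition cst (Z : finType) (v : R) : Z -> R := fun _ => v.

Definition Fml (I : finType) (mu : I -> R) (b : {set {set 'I_n}} -> R) :=
  forall V, Th I mu V = \sum_(P | partition P [set: 'I_n]) b P * tauP P mu V.

Lemma mlinTh (I : finType) (mu : I -> R) : (0 < #|I|)%N -> Mplus mu -> mlin (@anyvec R I) (Th I mu).
Proof. by move=> hI hmu; exact: ((Htf hI).1 mu hmu). Qed.

Lemma use_cong (I I' : finType) (K : I -> I' -> R) (kappa : I' -> I) (mu : I -> R) V :
  (0 < #|I|)%N -> (0 < #|I'|)%N -> markov_kernel K ->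
  (forall i i', kappa i' != i -> K i i' = 0) ->
  (forall mu, Mplus mu -> Mplus (pushK K mu)) -> Mplus mu ->
  Th I' (pushK K mu) (fun j => pushK K (V j)) = Th I mu V.
Proof.
move=> hI hI' HK Hk Hpres Hmu.
exact: (Hcong hI hI' (conj HK (ex_intro _ kappa Hk)) Hpres Hmu (fun _ => Logic.I)).
Qed.

Lemma descend (I I' : finType) (K : I -> I' -> R) (kappa : I' -> I) (mu : I -> R) b :
  (0 < #|I|)%N -> (0 < #|I'|)%N -> markov_kernel K ->
  (forall i i', kappa i' != i -> K i i' = 0) ->
  (forall mu, Mplus mu -> Mplus (pushK K mu)) -> Mplus mu ->
  Fml (pushK K mu) b -> Fml mu b.
Proof.
move=> hI hI' HK Hk Hpres Hmu HF V.
rewrite -(use_cong V hI hI' HK Hk Hpres Hmu) HF; apply: eq_bigr => P _.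
by rewrite (tauP_cong V P HK Hk (Hpres _ Hmu)).
Qed.

Lemma sum_eq1 (T : finType) (t0 : T) (r : R) : \sum_(t : T) (t == t0)%:R * r = r.
Proof.
rewrite (bigD1 t0) //= eqxx mul1r big1 ?addr0 // => t /negbTE ->; by rewrite mul0r.
Qed.

Lemma descend_fib (A W : finType) (pr : W -> A) (m : A -> nat) (mu : A -> R) b :
  (0 < #|A|)%N -> (0 < #|W|)%N -> (forall a, 0 < m a)%N ->
  (forall a, \sum_(u : W) (pr u == a)%:R = (m a)%:R :> R) -> Mplus mu ->
  Fml (fun u => mu (pr u) / (m (pr u))%:R) b -> Fml mu b /\
  mnorm (fun u => mu (pr u) / (m (pr u))%:R) = mnorm mu.
Proof.
move=> hA hW hm hfib Hmu HF.
pose K (a : A) (u : W) : R := (pr u == a)%:R / (m a)%:R.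
have Hk : forall a u, pr u != a -> K a u = 0 by move=> a u /negbTE e; rewrite /K e mul0r.
have mpos : forall a, 0 < (m a)%:R :> R by move=> a; rewrite ltr0n.
have HK : markov_kernel K.
  split; first by move=> a u; rewrite /K divr_ge0 ?ler0n.
  move=> a; rewrite /K -mulr_suml hfib divff //; exact: lt0r_neq0.
have pE : forall x : A -> R, pushK K x = fun u => x (pr u) / (m (pr u))%:R.
  move=> x; apply: functional_extensionality => u; rewrite (pushK_kappa _ _ Hk) /K eqxx.
  by rewrite mul1r mulrC.
have Hpres : forall mu, Mplus mu -> Mplus (pushK K mu).
  by move=> mu' Hmu' u; rewrite pE divr_gt0.
split.
  apply: (descend hA hW HK Hk Hpres Hmu); by rewrite pE.
by rewrite -pE mnorm_pushK.
Qed.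

Lemma prod_nat_forall (T : finType) (A : {pred T}) (b : T -> bool) :
  \prod_(t in A) (b t)%:R = ([forall t in A, b t])%:R :> R.
Proof.
case: (boolP [forall t in A, b t]) => h.
  by rewrite big1 // => t tA; move/forallP: h => /(_ t); rewrite tA /= => ->.
move: h; rewrite negb_forall => /existsP[t]; rewrite negb_imply => /andP[tA bt].
by rewrite (bigD1 t) //= (negbTE bt) mul0r.
Qed.

Lemma tau_block_dlt (Z : finType) (v : R) (B : {set 'I_n}) (x : 'I_n -> Z) :
  B != set0 -> tau_block B (cst v) (fun j => dlt (x j)) = v ^ (1 - #|B|%:Z) * (constB B x)%:R.
Proof.
case/set0Pn => j0 j0B; rewrite /tau_block /cst -mulr_sumr; congr (_ * _).
rewrite (bigD1 (x j0)) //= [X in _ + X]big1 ?addr0.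
  rewrite /dlt /= prod_nat_forall; congr ((nat_of_bool _)%:R); apply/idP/idP.
    move=> /forallP H; apply/forallP => j; apply/implyP => jB; apply/forallP => k.
    apply/implyP => kB; have := H j; rewrite jB /= => /eqP <-.
    by have := H k; rewrite kB /= => /eqP <-.
  move=> /forallP H; apply/forallP => j; apply/implyP => jB.
  by have := H j0; rewrite j0B /= => /forallP /(_ j); rewrite jB.
move=> z nz; rewrite (bigD1 j0) //= /dlt.
by rewrite (negbTE nz) mul0r.
Qed.

Lemma tauP_dlt (Z : finType) (v : R) (P : {set {set 'I_n}}) (x : 'I_n -> Z) :
  partition P [set: 'I_n] ->
  tauP P (cst v) (fun j => dlt (x j)) = (\prod_(B in P) v ^ (1 - #|B|%:Z)) * (constP P x)%:R.
Proof.
move=> HP; rewrite /tauP (eq_bigr (fun B : {set 'I_n} => v ^ (1 - #|B|%:Z) * (constB B x)%:R)).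
  by rewrite big_split /= prod_nat_forall.
move=> B BP; apply: tau_block_dlt; apply: contraTneq BP => ->.
by rewrite (partition0 HP).
Qed.

Lemma G_perm (Z : finType) (v : R) (x y : 'I_n -> Z) (s : Z -> Z) :
  injective s -> (forall j, s (x j) = y j) -> 0 < v ->
  Th Z (cst v) (fun j => dlt (x j)) = Th Z (cst v) (fun j => dlt (y j)).
Proof.
move=> sinj sxy hv.
have [sinv sK sKV] := injF_bij sinj.
case: (posnP #|Z|) => [Z0|hZ].
  congr (Th Z _ _); apply: functional_extensionality => j; exfalso.
  by move: (card0_eq Z0 (x j)); rewrite !inE.
pose K (z z' : Z) : R := (z' == s z)%:R.
have Hk : forall z z', sinv z' != z -> K z z' = 0.
  move=> z z' nz; rewrite /K; have -> : (z' == s z) = false; last by [].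
  by apply: contraNF nz => /eqP ->; rewrite sK.
have HK : markov_kernel K.
  split; first by move=> *; exact: ler0n.
  move=> z; rewrite /K (eq_bigr (fun z' => (z' == s z)%:R * 1)) ?sum_eq1 // => z' _.
  by rewrite mulr1.
have pE : forall f : Z -> R, pushK K f = fun z' => f (sinv z').
  move=> f; apply: functional_extensionality => z'.
  by rewrite (pushK_kappa _ _ Hk) /K sKV eqxx mul1r.
have Hpres : forall mu, Mplus mu -> Mplus (pushK K mu).
  by move=> mu Hmu z'; rewrite pE.
have Hv : Mplus (cst v : Z -> R) by move=> z.
have := use_cong (fun j => dlt (x j)) hZ hZ HK Hk Hpres Hv.
rewrite pE.
have -> : (fun z' => cst v (sinv z')) = (cst v : Z -> R) by [].
have -> : (fun j => pushK K (dlt (x j))) = fun j => dlt (y j).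
  apply: functional_extensionality => j; rewrite pE.
  apply: functional_extensionality => z'; rewrite /dlt -sxy.
  have -> : (sinv z' == x j) = (z' == s (x j)).
    by apply/eqP/eqP => [<-|->]; [rewrite sKV | rewrite sK].
  done.
by move=> ->.
Qed.


Lemma kernel_preim (Z : finType) (x : 'I_n -> Z) :
  partition (preim_partition x [set: 'I_n]) [set: 'I_n] /\
  forall j k, ((j, k) \in pairs (preim_partition x [set: 'I_n])) = (x j == x k).
Proof.
split; first exact: preim_partitionP.
move=> j k; rewrite (pairs_pblock j k (preim_partitionP _ _)) /preim_partition.
rewrite (pblock_equivalence_partition (R := fun a b => x a == x b)) ?inE //.
by move=> a b c _ _ _; split=> //= /eqP ->.
Qed.

Lemma pairs_pblockE (Q : {set {set 'I_n}}) : partition Q [set: 'I_n] ->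
  forall j k, ((j, k) \in pairs Q) = (pblock Q j == pblock Q k).
Proof.
move=> HQ j k; have /and3P[/eqP Qc tQ _] := HQ.
by rewrite pairs_pblock // eq_pblock // Qc inE.
Qed.

Lemma solve_at (Z : finType) (iota : {set 'I_n} -> Z) (v : R) :
  injective iota -> 0 < v -> exists b, Fml (cst v : Z -> R) b.
Proof.
move=> iinj hv.
have hZ : (0 < #|Z|)%N by apply/card_gt0P; exists (iota set0).
pose w (P : {set {set 'I_n}}) := \prod_(B in P) v ^ (1 - #|B|%:Z).
have Hw : forall P, partition P [set: 'I_n] -> w P != 0.
  move=> P _; apply: lt0r_neq0; apply: prodr_gt0 => B _; exact: exprz_gt0.
pose g Q := Th Z (cst v) (fun j => dlt (iota (pblock Q j))).
have [b Hb] := tri_exists g Hw.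
exists b.
have Hmu : Mplus (cst v : Z -> R) by move=> z.
apply: (basis_agree (iota set0) (mlinTh hZ Hmu) (sum_tauP_lin _ _)) => x.
have [HQ HQx] := kernel_preim x.
set Q := preim_partition x [set: 'I_n] in HQ HQx.
have kerx : forall j k, (x j == x k) = (iota (pblock Q j) == iota (pblock Q k)).
  by move=> j k; rewrite (inj_eq iinj) -pairs_pblockE // HQx.
have [s [sinj sx]] := perm_kernel kerx.
rewrite (G_perm sinj sx hv) -/(g Q) -Hb //; apply: eq_bigr => P HP.
by rewrite tauP_dlt // (constP_refines P HQx) mulrA.
Qed.

Local Notation NY := #|{: {set 'I_n}}|.

Lemma a_exists : exists a : R -> {set {set 'I_n}} -> R,
  forall c, 0 < c -> Fml (cst (c / NY%:R) : {set 'I_n} -> R) (a c).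
Proof.
apply: (functional_choice (fun c b => 0 < c -> Fml (cst (c / NY%:R) : {set 'I_n} -> R) b)) => c.
case: (ltrP 0 c) => hc; last by exists (fun _ => 0) => h; exfalso; lra.
have hY : (0 < NY)%N by apply/card_gt0P; exists set0.
have hv : 0 < c / NY%:R by rewrite divr_gt0 // ltr0n.
have [b Hb] := solve_at (fun a b (e : id a = id b) => e) hv.
by exists b.
Qed.

Lemma uniqY (c0 : R) b1 b2 : 0 < c0 ->
  Fml (cst c0 : {set 'I_n} -> R) b1 -> Fml (cst c0 : {set 'I_n} -> R) b2 ->
  forall P, partition P [set: 'I_n] -> b1 P = b2 P.
Proof.
move=> hc H1 H2.
pose w (P : {set {set 'I_n}}) := \prod_(B in P) c0 ^ (1 - #|B|%:Z).
have Hw : forall P, partition P [set: 'I_n] -> w P != 0.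
  move=> P _; apply: lt0r_neq0; apply: prodr_gt0 => B _; exact: exprz_gt0.
suff h : forall P, partition P [set: 'I_n] -> b1 P - b2 P = 0.
  by move=> P HP; apply/eqP; rewrite -subr_eq0 h.
apply: (tri_uniq (w:=w) (u := fun P => b1 P - b2 P) Hw) => Q HQ.
have e := H1 (fun j => dlt (pblock Q j)); rewrite H2 in e.
transitivity (\sum_(P | partition P [set: 'I_n])
   (b1 P * tauP P (cst c0) (fun j => dlt (pblock Q j)) - b2 P * tauP P (cst c0) (fun j => dlt (pblock Q j)))).
  apply: eq_bigr => P HP; rewrite tauP_dlt // (constP_refines P (pairs_pblockE HQ)).
  rewrite /w; ring.
by rewrite sumrB e subrr.
Qed.

Section WithA.
Variable a : R -> {set {set 'I_n}} -> R.
Hypothesis Ha : forall c, 0 < c -> Fml (cst (c / NY%:R) : {set 'I_n} -> R) (a c).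

Lemma stepU (Z : finType) (v : R) : (0 < #|Z|)%N -> 0 < v ->
  Fml (cst v : Z -> R) (a (v * #|Z|%:R)).
Proof.
move=> hZ hv; have /card_gt0P[z0 _] := hZ.
set c := v * #|Z|%:R.
have hY : (0 < NY)%N by apply/card_gt0P; exists set0.
have Zr : 0 < #|Z|%:R :> R by rewrite ltr0n.
have Yr : 0 < NY%:R :> R by rewrite ltr0n.
have hc : 0 < c by rewrite mulr_gt0.
pose iota (S : {set 'I_n}) : (Z * {set 'I_n})%type := (z0, S).
have iinj : injective iota by move=> S1 S2 [].
have hw : 0 < v / NY%:R by rewrite divr_gt0.
have [b Hb] := solve_at iinj hw.
have hW : (0 < #|{: Z * {set 'I_n}}|)%N by apply/card_gt0P; exists (z0, set0).
have fib2 : forall S : {set 'I_n}, \sum_(u : Z * {set 'I_n}) (u.2 == S)%:R = (#|Z|)%:R :> R.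
  move=> S; rewrite -(pair_bigA _ (fun (z : Z) (S' : {set 'I_n}) => (S' == S)%:R)) /=.
  rewrite (eq_bigr (fun _ => 1)) ?sumr_const // => z _.
  by rewrite (eq_bigr (fun S' => (S' == S)%:R * 1)) ?sum_eq1 // => S' _; rewrite mulr1.
have fib1 : forall z : Z, \sum_(u : Z * {set 'I_n}) (u.1 == z)%:R = NY%:R :> R.
  move=> z; rewrite -(pair_bigA _ (fun (z' : Z) (S : {set 'I_n}) => (z' == z)%:R)) /=.
  rewrite (eq_bigr (fun z' => (z' == z)%:R * NY%:R)) ?sum_eq1 // => z' _.
  by rewrite sumr_const mulr_natr.
have Hc0 : Mplus (cst (c / NY%:R) : {set 'I_n} -> R) by move=> S; rewrite /cst divr_gt0.
have Hb2 : Fml (fun u : Z * {set 'I_n} => cst (c / NY%:R) u.2 / #|Z|%:R) b.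
  have -> : (fun u : Z * {set 'I_n} => cst (c / NY%:R) u.2 / #|Z|%:R) = cst (v / NY%:R).
    apply: functional_extensionality => u; rewrite /cst /c; field.
    by apply/andP; split; apply: lt0r_neq0.
  exact: Hb.
have [HY _] := descend_fib (pr := snd) (m := fun _ => #|Z|) (mu := cst (c / NY%:R)) (b := b)
   hY hW (fun _ => hZ) fib2 Hc0 Hb2.
have eb := uniqY (divr_gt0 hc Yr) (Ha hc) HY.
have Hv : Mplus (cst v : Z -> R) by move=> z.
have Hb1 : Fml (fun u : Z * {set 'I_n} => cst v u.1 / NY%:R) b by exact: Hb.
have [HZ _] := descend_fib (pr := fst) (m := fun _ => NY) (mu := cst v) (b := b)
   hZ hW (fun _ => hY) fib1 Hv Hb1.
move=> V; rewrite HZ; apply: eq_bigr => P HP; by rewrite eb.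
Qed.

Lemma stepR (I : finType) (k : I -> nat) (c' : R) (mu : I -> R) :
  (0 < #|I|)%N -> 0 < c' -> (forall i, 0 < k i)%N -> (forall i, mu i = c' * (k i)%:R) ->
  Fml mu (a (mnorm mu)).
Proof.
move=> hI hc hk Hmu.
have Mmu : Mplus mu by move=> i; rewrite Hmu mulr_gt0 // ltr0n.
have /card_gt0P[i0 _] := hI.
have hX : (0 < #|{: {i : I & 'I_(k i)}}|)%N.
  by apply/card_gt0P; exists (Tagged (fun i => 'I_(k i)) (Ordinal (hk i0))).
have fib : forall i, \sum_(u : {i : I & 'I_(k i)}) (tag u == i)%:R = (k i)%:R :> R.
  move=> i.
  transitivity (\sum_(i' : I) \sum_(j : 'I_(k i')) (i' == i)%:R : R).
    by rewrite (sig_big_dep (fun _ => true) (fun _ _ => true) (fun i' (_ : 'I_(k i')) => (i' == i)%:R : R)).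
  rewrite (bigD1 i) //= [X in _ + X]big1 ?addr0.
    by rewrite eqxx sumr_const card_ord.
  by move=> i' /negbTE ->; rewrite big1.
have e : (fun u : {i : I & 'I_(k i)} => mu (tag u) / (k (tag u))%:R) = cst c'.
  apply: functional_extensionality => u; rewrite Hmu /cst mulfK //.
  by apply: lt0r_neq0; rewrite ltr0n.
have HF : Fml (fun u : {i : I & 'I_(k i)} => mu (tag u) / (k (tag u))%:R)
     (a (c' * #|{: {i : I & 'I_(k i)}}|%:R)).
  by rewrite e; apply: stepU.
have [H1 H2] := descend_fib (pr := tag) (m := k) (mu := mu)
   (b := a (c' * #|{: {i : I & 'I_(k i)}}|%:R)) hI hX hk fib Mmu HF.
rewrite e in H2.
have Hn : mnorm (cst c' : {i : I & 'I_(k i)} -> R) = c' * #|{: {i : I & 'I_(k i)}}|%:R.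
  rewrite /mnorm /cst (eq_bigr (fun _ => c')) ?sumr_const ?mulr_natr // => u _.
  by rewrite ger0_norm // ltW.
by rewrite -H2 Hn.
Qed.

End WithA.
End PartD.
Section PartE.
Variable R : realType.

Definition ctsat (I : finType) (D : (I -> R) -> Prop) (f : (I -> R) -> R) (mu : I -> R) :=
  forall eps, 0 < eps -> exists2 d, 0 < d &
    forall nu, D nu -> (forall i, `|nu i - mu i| < d) -> `|f nu - f mu| < eps.

Lemma arith_mul (eps x y z A B : R) : 0 < eps -> 0 <= x -> 0 <= z -> 0 <= A -> 0 <= B -> 0 <= y ->
  x * (2 * (B + 1)) < eps -> z < 1 -> z * (2 * (A + 1)) < eps -> y <= B + z -> x * y + A * z < eps.
Proof. move=> *. nra. Qed.

Lemma arith_inv (eps x A y : R) : 0 < eps -> 0 < A -> 0 <= x -> x < A / 2 ->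
  x < eps * A * A / 2 -> A - x <= y -> x < eps * (y * A).
Proof. move=> *. nra. Qed.

Section CT.
Variable I : finType.
Variable D : (I -> R) -> Prop.
Local Notation ctsat := (@ctsat I D).

Lemma min_split (nu mu : I -> R) d1 d2 :
  (forall i, `|nu i - mu i| < Num.min d1 d2) ->
  (forall i, `|nu i - mu i| < d1) /\ (forall i, `|nu i - mu i| < d2).
Proof.
by move=> H; split => i; have := H i; rewrite lt_min => /andP[].
Qed.

Lemma ct_cst (c : R) (mu : I -> R) : ctsat (fun _ => c) mu.
Proof. by move=> eps he; exists 1 => // nu _ _; rewrite subrr normr0. Qed.

Lemma ct_proj (i : I) (mu : I -> R) : ctsat (fun nu => nu i) mu.
Proof. by move=> eps he; exists eps => // nu _; apply. Qed.

Lemma ct_add (f g : (I -> R) -> R) mu : ctsat f mu -> ctsat g mu -> ctsat (fun nu => f nu + g nu) mu.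
Proof.
move=> cf cg eps he.
have he2 : 0 < eps / 2 by rewrite divr_gt0.
have [d1 hd1 H1] := cf _ he2; have [d2 hd2 H2] := cg _ he2.
exists (Num.min d1 d2); first by rewrite lt_min hd1 hd2.
move=> nu Dnu /min_split [h1 h2].
have := H1 nu Dnu h1; have := H2 nu Dnu h2.
have e : f nu + g nu - (f mu + g mu) = (f nu - f mu) + (g nu - g mu) by ring.
rewrite e => a b; apply: le_lt_trans (ler_normD _ _) _; lra.
Qed.

Lemma ct_mul (f g : (I -> R) -> R) mu : ctsat f mu -> ctsat g mu -> ctsat (fun nu => f nu * g nu) mu.
Proof.
move=> cf cg eps he.
set a0 := f mu; set b0 := g mu.
have hB : 0 < 2 * (`|b0| + 1) by rewrite mulr_gt0 // ltr_wpDl.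
have hA : 0 < 2 * (`|a0| + 1) by rewrite mulr_gt0 // ltr_wpDl.
have h1 : 0 < eps / (2 * (`|b0| + 1)) by rewrite divr_gt0.
have h2 : 0 < Num.min 1 (eps / (2 * (`|a0| + 1))) by rewrite lt_min ltr01 divr_gt0.
have [d1 hd1 H1] := cf _ h1; have [d2 hd2 H2] := cg _ h2.
exists (Num.min d1 d2); first by rewrite lt_min hd1 hd2.
move=> nu Dnu /min_split [k1 k2].
have := H1 nu Dnu k1; have := H2 nu Dnu k2; rewrite lt_min => /andP[z1 z2].
rewrite ltr_pdivlMr // => x1; rewrite ltr_pdivlMr // in z2.
have e : f nu * g nu - a0 * b0 = (f nu - a0) * g nu + a0 * (g nu - b0) by rewrite /a0 /b0; ring.
have y := ler_distD b0 (g nu) 0; rewrite !subr0 addrC in y.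
rewrite e; apply: le_lt_trans (ler_normD _ _) _; rewrite !normrM.
rewrite -/a0 -/b0 in x1 z1 z2.
exact: (arith_mul he (normr_ge0 _) (normr_ge0 _) (normr_ge0 _) (normr_ge0 _) (normr_ge0 _) x1 z1 z2 y).
Qed.

Lemma ct_inv (f : (I -> R) -> R) mu : ctsat f mu -> f mu != 0 -> ctsat (fun nu => (f nu)^-1) mu.
Proof.
move=> cf nz eps he.
set a0 := f mu.
have hA : 0 < `|a0| by rewrite normr_gt0.
have h1 : 0 < Num.min (`|a0| / 2) (eps * `|a0| * `|a0| / 2).
  by rewrite lt_min !divr_gt0 // !mulr_gt0.
have [d hd H] := cf _ h1.
exists d => // nu Dnu Hnu.
have := H nu Dnu Hnu; rewrite lt_min => /andP[x1 x2].
set a := f nu in x1 x2 *.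
have y : `|a0| - `|a - a0| <= `|a|.
  have y0 := lerB_dist a0 (a0 - a).
  have ea : a0 - (a0 - a) = a by ring.
  by rewrite ea (distrC a0 a) in y0.
have ya : 0 < `|a| by apply: lt_le_trans y; lra.
have anz : a != 0 by rewrite -normr_gt0.
have e : a^-1 - a0^-1 = (a0 - a) / (a * a0) by field; apply/andP.
rewrite e normrM normfV normrM distrC ltr_pdivrMr ?mulr_gt0 //.
exact: arith_inv.
Qed.

Lemma ct_sum (J : finType) (Pr : pred J) (F : J -> (I -> R) -> R) mu :
  (forall r, ctsat (F r) mu) -> ctsat (fun nu => \sum_(r | Pr r) F r nu) mu.
Proof.
move=> HF; rewrite /ctsat.
suff H : forall s : seq J, ctsat (fun nu => \sum_(r <- s | Pr r) F r nu) mu by exact: H.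
elim=> [|r s IH].
  by under [X in ctsat X]functional_extensionality do rewrite big_nil; exact: ct_cst.
have -> : (fun nu => \sum_(r0 <- r :: s | Pr r0) F r0 nu) =
   (fun nu => (if Pr r then F r nu else 0) + \sum_(r0 <- s | Pr r0) F r0 nu).
  apply: functional_extensionality => nu; rewrite big_cons; by case: (Pr r); rewrite ?add0r.
apply: ct_add => //; case: (Pr r) => //; exact: ct_cst.
Qed.

Lemma ct_prod (J : finType) (Pr : pred J) (F : J -> (I -> R) -> R) mu :
  (forall r, ctsat (F r) mu) -> ctsat (fun nu => \prod_(r | Pr r) F r nu) mu.
Proof.
move=> HF.
suff H : forall s : seq J, ctsat (fun nu => \prod_(r <- s | Pr r) F r nu) mu by exact: H.
elim=> [|r s IH].
  by under [X in ctsat X]functional_extensionality do rewrite big_nil; exact: ct_cst.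
have -> : (fun nu => \prod_(r0 <- r :: s | Pr r0) F r0 nu) =
   (fun nu => (if Pr r then F r nu else 1) * \prod_(r0 <- s | Pr r0) F r0 nu).
  apply: functional_extensionality => nu; rewrite big_cons; by case: (Pr r); rewrite ?mul1r.
apply: ct_mul => //; case: (Pr r) => //; exact: ct_cst.
Qed.

Lemma ct_expn (f : (I -> R) -> R) mu (m : nat) : ctsat f mu -> ctsat (fun nu => f nu ^+ m) mu.
Proof.
move=> cf; elim: m => [|m IH].
  by under [X in ctsat X]functional_extensionality do rewrite expr0; exact: ct_cst.
by under [X in ctsat X]functional_extensionality do rewrite exprS; exact: ct_mul.
Qed.

Lemma ct_exprz (f : (I -> R) -> R) mu (z : int) : ctsat f mu -> f mu != 0 ->
  ctsat (fun nu => f nu ^ z) mu.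
Proof.
move=> cf nz; case: z => m; first exact: ct_expn.
apply: (ct_inv (f := fun nu => f nu ^+ m.+1)); first exact: ct_expn.
exact: expf_neq0.
Qed.

Lemma ct_unif (J : finType) (G : J -> (I -> R) -> R) mu :
  (forall r, ctsat (G r) mu) ->
  forall eps, 0 < eps -> exists2 d, 0 < d &
    forall nu, D nu -> (forall i, `|nu i - mu i| < d) -> forall r, `|G r nu - G r mu| < eps.
Proof.
move=> HG eps he.
suff H : forall s : seq J, exists2 d, 0 < d &
    forall nu, D nu -> (forall i, `|nu i - mu i| < d) -> forall r, r \in s -> `|G r nu - G r mu| < eps.
  have [d hd Hd] := H (enum J); exists d => // nu Dnu Hnu r; apply: Hd => //.
  by rewrite mem_enum.
elim=> [|r s [d hd Hd]]; first by exists 1.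
have [d1 hd1 H1] := HG r eps he.
exists (Num.min d1 d); first by rewrite lt_min hd1 hd.
move=> nu Dnu /min_split [k1 k2] r'; rewrite inE => /orP[/eqP ->|rs].
  exact: H1.
exact: Hd.
Qed.

End CT.
End PartE.
Section PartF.
Variable R : realType.

Lemma approx (I : finType) (mu : I -> R) (d : R) : (0 < #|I|)%N -> Mplus mu -> 0 < d ->
  exists c' : R, exists k : I -> nat,
   [/\ 0 < c', (forall i, 0 < k i)%N, (forall i, `|c' * (k i)%:R - mu i| < d) &
       \sum_i c' * (k i)%:R = \sum_i mu i].
Proof.
move=> hI Hmu hd.
have /card_gt0P[i0 _] := hI.
set c := \sum_i mu i.
have cE : c = mu i0 + \sum_(i | i != i0) mu i by rewrite /c (bigD1 i0).
have hS0 : 0 <= \sum_(i | i != i0) mu i by apply: sumr_ge0 => i _; exact: ltW.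
have hm0 := Hmu i0.
have hc : 0 < c by rewrite cE; lra.
have hIr : 1 <= #|I|%:R :> R by rewrite ler1n.
set Kb := \sum_i c / mu i + c * #|I|%:R / d.
have Kb0 : 0 <= Kb.
  apply: addr_ge0.
    by apply: sumr_ge0 => i _; apply: divr_ge0; [exact: ltW | exact: ltW (Hmu i)].
  by apply: divr_ge0; [apply: mulr_ge0; [exact: ltW | exact: ler0n] | exact: ltW].
set N := (Num.truncn Kb).+1.
have hN : Kb < N%:R by have /andP[_] := truncn_itv Kb0.
have Nr : 0 < N%:R :> R by rewrite ltr0n.
set c' := c / N%:R.
have hc' : 0 < c' by rewrite divr_gt0.
have cN : c' * N%:R = c by rewrite /c' mulfVK // lt0r_neq0.
have c'mu : forall i, c' <= mu i.
  move=> i; rewrite /c' ler_pdivrMr //.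
  have : c / mu i <= Kb.
    rewrite /Kb (bigD1 i) //= -addrA lerDl; apply: addr_ge0.
      by apply: sumr_ge0 => j _; apply: divr_ge0; [exact: ltW | exact: ltW (Hmu j)].
    by apply: divr_ge0; [apply: mulr_ge0; [exact: ltW | exact: ler0n] | exact: ltW].
  rewrite ler_pdivrMr // => h; have h2 : c <= Kb * mu i by [].
  have := Hmu i => hmi; nra.
have c'd : c' * #|I|%:R < d.
  rewrite /c' mulrAC ltr_pdivrMr //.
  have : c * #|I|%:R / d <= Kb.
    rewrite /Kb lerDr; apply: sumr_ge0 => i _; apply: divr_ge0; [exact: ltW | exact: ltW (Hmu i)].
  rewrite ler_pdivrMr // => h; nra.
pose t i := Num.truncn (mu i / c').
have tE : forall i, c' * (t i)%:R <= mu i < c' * (t i)%:R + c'.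
  move=> i; have /andP[h1 h2] := truncn_itv (divr_ge0 (ltW (Hmu i)) (ltW hc')).
  rewrite -/(t i) in h1 h2.
  have h1' : (t i)%:R <= mu i / c' := h1.
  have h2' : mu i / c' < (t i).+1%:R := h2.
  rewrite (ler_pdivlMr _ _ hc') in h1'; rewrite (ltr_pdivrMr _ _ hc') in h2'.
  move: h1' h2' => {h1 h2} h1 h2.
  apply/andP; split; first by rewrite mulrC.
  by rewrite -natr1 mulrDl mul1r in h2; rewrite mulrC.
have t1 : forall i, (0 < t i)%N.
  move=> i; have h : 1 <= mu i / c' by rewrite ler_pdivlMr // mul1r.
  have h0 : 0 <= mu i / c' by rewrite divr_ge0 // ltW.
  by rewrite /t truncn_ge_nat.
set S := (\sum_(i | i != i0) t i)%N.
have SE : c' * S%:R = \sum_(i | i != i0) c' * (t i)%:R by rewrite natr_sum mulr_sumr.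
have Sle : c' * S%:R <= \sum_(i | i != i0) mu i.
  by rewrite SE; apply: ler_sum => i _; have /andP[] := tE i.
have SN : (S < N)%N.
  rewrite -(ltr_nat R) -(ltr_pM2l hc') cN cE; lra.
pose k i := if i == i0 then (N - S)%N else t i.
have kE : forall i, i != i0 -> k i = t i by move=> i /negbTE h; rewrite /k h.
have k0 : (k i0)%:R = N%:R - S%:R :> R by rewrite /k eqxx natrB // ltnW.
have sumE : \sum_i c' * (k i)%:R = c.
  rewrite (bigD1 i0) //= (eq_bigr (fun i => c' * (t i)%:R)) => [|i /kE ->] //.
  by rewrite -SE k0 mulrBr cN subrK.
have errsum : \sum_(i | i != i0) (mu i - c' * (t i)%:R) <= c' * #|I|%:R - c'.
  have h : \sum_(i : I) c' = c' * #|I|%:R by rewrite sumr_const mulr_natr.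
  rewrite (bigD1 i0) //= in h.
  have h2 : \sum_(i | i != i0) (mu i - c' * (t i)%:R) <= \sum_(i | i != i0) c'.
    by apply: ler_sum => i _; have /andP[h1 h2] := tE i; lra.
  lra.
have errpos : 0 <= \sum_(i | i != i0) (mu i - c' * (t i)%:R).
  apply: sumr_ge0 => i _; have /andP[h1 h2] := tE i; lra.
exists c', k; split => //.
- move=> i; case: (eqVneq i i0) => [->|ni]; last by rewrite kE.
  by rewrite /k eqxx subn_gt0.
- move=> i; case: (eqVneq i i0) => [->|ni].
    have e : c' * (k i0)%:R - mu i0 = \sum_(i | i != i0) (mu i - c' * (t i)%:R).
      rewrite k0 mulrBr cN sumrB -SE cE; ring.
    rewrite e ger0_norm //; lra.
  rewrite kE // distrC ger0_norm; have /andP[h1 h2] := tE i; first lra.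
  lra.
Qed.

End PartF.
Section PartG.
Variable R : realType.
Variable n : nat.

Lemma ct_tauP (I : finType) (D : (I -> R) -> Prop) (P : {set {set 'I_n}}) (V : 'I_n -> I -> R) (mu : I -> R) :
  Mplus mu -> ctsat D (fun nu => tauP P nu V) mu.
Proof.
move=> Hmu; rewrite /tauP; apply: ct_prod => B; rewrite /tau_block.
apply: ct_sum => i; apply: ct_mul; last exact: ct_cst.
apply: (ct_exprz (f := fun nu => nu i)); first exact: ct_proj.
exact: lt0r_neq0.
Qed.

Lemma ct_sumtau (I : finType) (D : (I -> R) -> Prop) (b : {set {set 'I_n}} -> R) (V : 'I_n -> I -> R) (mu : I -> R) :
  Mplus mu -> ctsat D (fun nu => \sum_(P | partition P [set: 'I_n]) b P * tauP P nu V) mu.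
Proof.
move=> Hmu; apply: ct_sum => P; apply: ct_mul; first exact: ct_cst.
exact: ct_tauP.
Qed.

Lemma mnorm_pos (I : finType) (mu : I -> R) : Mplus mu -> mnorm mu = \sum_i mu i.
Proof. by move=> H; apply: eq_bigr => i _; rewrite ger0_norm // ltW. Qed.

Section WithTh.
Variable Th : forall I : finType, (I -> R) -> ('I_n -> I -> R) -> R.
Arguments Th : clear implicits.
Hypothesis Htf : forall I : finType, (0 < #|I|)%N ->
        tensor_field (@Mplus R I) (@anyvec R I) (Th I).
Hypothesis Hcong : congruent_family (@Mplus R) (@anyvec R) Th.
Variable a : R -> {set {set 'I_n}} -> R.
Hypothesis Ha : forall c, 0 < c -> Fml Th (cst (c / #|{: {set 'I_n}}|%:R) : {set 'I_n} -> R) (a c).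

Lemma fml_all (I : finType) (mu : I -> R) : (0 < #|I|)%N -> Mplus mu -> Fml Th mu (a (mnorm mu)).
Proof.
move=> hI Hmu V.
set c := mnorm mu.
set F1 := Th I mu V.
set F2 := \sum_(P | partition P [set: 'I_n]) a c P * tauP P mu V.
apply/eqP; rewrite -subr_eq0; apply/negPn/negP => hne.
have he : 0 < `|F1 - F2| by rewrite normr_gt0.
set e := `|F1 - F2| in he.
have he2 : 0 < e / 2 by rewrite divr_gt0.
have [d1 hd1 H1] := (Htf hI).2 V (fun _ => Logic.I) mu Hmu (e / 2) he2.
have [d2 hd2 H2] := ct_sumtau (@Mplus R I) (a c) V Hmu he2.
have hd : 0 < Num.min d1 d2 by rewrite lt_min hd1 hd2.
have [c' [k [hc' hk hclose hsum]]] := approx hI Hmu hd.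
pose nu := fun i => c' * (k i)%:R.
have Hnu : Mplus nu by move=> i; rewrite /nu mulr_gt0 // ltr0n.
have mn : mnorm nu = c by rewrite /c !mnorm_pos.
have Fn := stepR Htf Hcong Ha hI hc' hk (fun i => erefl (nu i)) V.
rewrite mn in Fn.
have [cl1 cl2] := min_split (nu := nu) hclose.
have a1 := H1 nu Hnu cl1; have a2 := H2 nu Hnu cl2.
rewrite -/F1 Fn in a1; rewrite -/F2 in a2.
have t := ler_distD (\sum_(P | partition P [set: 'I_n]) a c P * tauP P nu V) F1 F2.
set G := \sum_(P | partition P [set: 'I_n]) a c P * tauP P nu V in a1 t.
rewrite (distrC F1 G) -/e in t. rewrite /= -/G in a2.
have : e < e by lra.
by rewrite ltxx.
Qed.

End WithTh.
End PartG.
Section PartH.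
Variable R : realType.
Variable n : nat.

Definition nrm (I : finType) (mu : I -> R) : I -> R := fun i => mu i / \sum_i' mu i'.
Definition prj (I : finType) (mu x : I -> R) : I -> R := fun i => x i - (\sum_i' x i') * nrm mu i.

Lemma sum_gt0 (I : finType) (mu : I -> R) : (0 < #|I|)%N -> Mplus mu -> 0 < \sum_i mu i.
Proof.
move=> hI Hmu; have /card_gt0P[i0 _] := hI.
rewrite (bigD1 i0) //=; apply: ltr_pwDl; first exact: Hmu.
by apply: sumr_ge0 => i _; exact: ltW.
Qed.

Lemma sum_nrm (I : finType) (mu : I -> R) : (0 < #|I|)%N -> Mplus mu -> \sum_i nrm mu i = 1.
Proof.
move=> hI Hmu; rewrite /nrm -mulr_suml divff //; exact: lt0r_neq0 (sum_gt0 hI Hmu).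
Qed.

Lemma nrm_P (I : finType) (mu : I -> R) : (0 < #|I|)%N -> Mplus mu -> Pplus (nrm mu).
Proof.
move=> hI Hmu; split; last exact: sum_nrm.
by move=> i; rewrite /nrm divr_gt0 // sum_gt0.
Qed.

Lemma prj_S0 (I : finType) (mu x : I -> R) : (0 < #|I|)%N -> Mplus mu -> S0 (prj mu x).
Proof.
move=> hI Hmu; rewrite /S0 /prj sumrB -mulr_sumr sum_nrm // mulr1 subrr //.
Qed.

Lemma S0_closed (I : finType) : Tclosed (@S0 R I).
Proof.
split; first by rewrite /S0 big1.
move=> a x y hx hy; rewrite /S0 big_split /= -mulr_sumr hx hy; ring.
Qed.

Lemma prj_lin (I : finType) (mu x y : I -> R) a :
  prj mu (fun i => a * x i + y i) = fun i => a * prj mu x i + prj mu y i.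
Proof.
apply: functional_extensionality => i; rewrite /prj big_split /= -mulr_sumr; ring.
Qed.

Lemma upd_prj (I : finType) (mu : I -> R) (V : 'I_n -> I -> R) k w :
  (fun j => prj mu (upd V k w j)) = upd (fun j => prj mu (V j)) k (prj mu w).
Proof.
by apply: functional_extensionality => j; rewrite /upd; case: (j == k).
Qed.

Lemma pushK_lin (I I' : finType) (K : I -> I' -> R) (x y : I -> R) a :
  pushK K (fun i => a * x i + y i) = fun i' => a * pushK K x i' + pushK K y i'.
Proof.
apply: functional_extensionality => i'; rewrite /pushK mulr_sumr -big_split /=.
by apply: eq_bigr => i _; ring.
Qed.

Lemma pushK_nrm (I I' : finType) (K : I -> I' -> R) (mu : I -> R) :
  markov_kernel K -> pushK K (nrm mu) = nrm (pushK K mu).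
Proof.
move=> HK; apply: functional_extensionality => i'.
rewrite /nrm sum_pushK // /pushK mulr_suml; apply: eq_bigr => i _; ring.
Qed.

Lemma pushK_prj (I I' : finType) (K : I -> I' -> R) (mu x : I -> R) :
  markov_kernel K -> pushK K (prj mu x) = prj (pushK K mu) (pushK K x).
Proof.
move=> HK; apply: functional_extensionality => i'.
rewrite /prj sum_pushK // -(pushK_nrm _ HK).
have -> : (fun i => x i - (\sum_i' x i') * nrm mu i) = (fun i => (- (\sum_i' x i')) * nrm mu i + x i).
  by apply: functional_extensionality => i; ring.
by rewrite pushK_lin; ring.
Qed.

Section WithThB.
Variable Th : forall I : finType, (I -> R) -> ('I_n -> I -> R) -> R.
Arguments Th : clear implicits.
Hypothesis Htf : forall I : finType, (0 < #|I|)%N ->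
        tensor_field (@Pplus R I) (@S0 R I) (Th I).
Hypothesis Hcong : congruent_family (@Pplus R) (@S0 R) Th.

Definition Tht (I : finType) (mu : I -> R) (V : 'I_n -> I -> R) : R :=
  Th I (nrm mu) (fun j => prj mu (V j)).

Lemma Tht_lin (I : finType) (mu : I -> R) : (0 < #|I|)%N -> Mplus mu -> mlin (@anyvec R I) (Tht mu).
Proof.
move=> hI Hmu V _ k a x y _ _; rewrite /Tht !upd_prj prj_lin.
apply: (Htf hI).1; first exact: nrm_P.
  by move=> j; exact: prj_S0.
all: exact: prj_S0.
Qed.

Lemma Tht_cong : congruent_family (@Mplus R) (@anyvec R) Tht.
Proof.
move=> I I' hI hI' K [HK [kappa Hk]] Hpres mu Hmu V _.
rewrite /Tht -pushK_nrm //.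
have -> : (fun j => prj (pushK K mu) (pushK K (V j))) = (fun j => pushK K (prj mu (V j))).
  by apply: functional_extensionality => j; rewrite pushK_prj.
apply: Hcong => //.
- exact: (conj HK (ex_intro _ kappa Hk)).
- move=> p [Hp Hs]; split; first exact: Hpres.
  by rewrite sum_pushK.
- exact: nrm_P.
- move=> j; exact: prj_S0.
Qed.


Lemma ct_eqD (I : finType) (D : (I -> R) -> Prop) (f g : (I -> R) -> R) (mu : I -> R) :
  (forall nu, D nu -> f nu = g nu) -> D mu -> ctsat D g mu -> ctsat D f mu.
Proof.
move=> e Dmu cg eps he; have [d hd H] := cg eps he.
by exists d => // nu Dnu Hnu; rewrite !e //; exact: H.
Qed.

Lemma ct_nrm (I : finType) (mu : I -> R) (i : I) : (0 < #|I|)%N -> Mplus mu ->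
  ctsat (@Mplus R I) (fun nu => nrm nu i) mu.
Proof.
move=> hI Hmu; rewrite /nrm; apply: ct_mul; first exact: ct_proj.
apply: (ct_inv (f := fun nu => \sum_i' nu i')); last exact: lt0r_neq0 (sum_gt0 hI Hmu).
by apply: ct_sum => i'; exact: ct_proj.
Qed.

Lemma ct_Th_nrm (I : finType) (U : 'I_n -> I -> R) (mu : I -> R) :
  (0 < #|I|)%N -> (forall j, S0 (U j)) -> Mplus mu ->
  ctsat (@Mplus R I) (fun nu => Th I (nrm nu) U) mu.
Proof.
move=> hI HU Hmu eps he.
have [d1 hd1 H1] := (Htf hI).2 U HU (nrm mu) (nrm_P hI Hmu) eps he.
have [d hd Hd] := ct_unif (G := fun i nu => nrm nu i) (fun i => ct_nrm i hI Hmu) hd1.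
exists d => // nu Dnu Hnu; apply: H1; first exact: nrm_P.
by move=> i; exact: Hd.
Qed.

Lemma ct_hyb (I : finType) (V : 'I_n -> I -> R) (mu : I -> R) :
  (0 < #|I|)%N -> Mplus mu -> forall m (U : 'I_n -> I -> R), (forall j, S0 (U j)) ->
  ctsat (@Mplus R I) (fun nu => Th I (nrm nu) (fun j => if (j < m)%N then prj nu (V j) else U j)) mu.
Proof.
move=> hI Hmu; have /card_gt0P[i0 _] := hI.
elim=> [|m IH] U HU.
  have -> : (fun nu => Th I (nrm nu) (fun j => if (j < 0)%N then prj nu (V j) else U j)) =
            (fun nu => Th I (nrm nu) U).
    by apply: functional_extensionality => nu; congr (Th I _ _); apply: functional_extensionality => j.
  exact: ct_Th_nrm.
case: (ltnP m n) => [mn|nm]; last first.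
  have -> : (fun nu => Th I (nrm nu) (fun j => if (j < m.+1)%N then prj nu (V j) else U j)) =
            (fun nu => Th I (nrm nu) (fun j => if (j < m)%N then prj nu (V j) else U j)).
    apply: functional_extensionality => nu; congr (Th I _ _); apply: functional_extensionality => j.
    by rewrite (leq_trans (ltn_ord j) nm) (leq_trans (ltn_ord j) (leqW nm)).
  exact: IH.
set k := Ordinal mn.
set s := \sum_i V k i.
pose e : I -> R := dlt i0.
have se : \sum_i e i = 1.
  by rewrite /e /dlt (bigD1 i0) //= eqxx big1 ?addr0 // => i /negbTE ->.
pose A : I -> R := fun i => V k i - s * e i.
pose B (i' : I) : I -> R := fun i => e i - dlt i' i.
have SA : S0 A by rewrite /S0 /A sumrB -mulr_sumr se mulr1 subrr.
have SB : forall i', S0 (B i').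
  move=> i'; rewrite /S0 /B sumrB se.
  by rewrite /dlt (bigD1 i') //= eqxx big1 ?addr0 ?subrr // => i /negbTE ->.
pose hyb (U' : 'I_n -> I -> R) (nu : I -> R) := fun j : 'I_n => if (j < m)%N then prj nu (V j) else U' j.
have HS : forall U', (forall j, S0 (U' j)) -> forall nu, Mplus nu -> forall j, S0 (hyb U' nu j).
  move=> U' HU' nu Hnu j; rewrite /hyb; case: (j < m)%N; [exact: prj_S0 | exact: HU'].
have upd_hyb : forall U' w nu, upd (hyb U' nu) k w = hyb (upd U' k w) nu.
  move=> U' w nu; apply: functional_extensionality => j; rewrite /upd /hyb.
  case: (eqVneq j k) => [->|//]; by rewrite /= ltnn.
have key : forall nu, Mplus nu ->
  Th I (nrm nu) (fun j => if (j < m.+1)%N then prj nu (V j) else U j) =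
  1 * Th I (nrm nu) (hyb (upd U k A) nu) +
  \sum_(i' : I) (s * nrm nu i') * Th I (nrm nu) (hyb (upd U k (B i')) nu).
  move=> nu Hnu.
  have e1 : (fun j : 'I_n => if (j < m.+1)%N then prj nu (V j) else U j) =
      upd (hyb U nu) k (fun i => 1 * A i + \sum_(i' : I) (s * nrm nu i') * B i' i).
    apply: functional_extensionality => j; rewrite /upd /hyb.
    case: (eqVneq j k) => [->|njk].
      rewrite /= ltnSn; apply: functional_extensionality => i.
      rewrite /prj /A /B -/s.
      rewrite (eq_bigr (fun i' => s * e i * nrm nu i' - s * (nrm nu i' * dlt i' i))); last first.
        by move=> i' _; ring.
      rewrite sumrB -mulr_sumr sum_nrm // mulr1 -mulr_sumr.
      have -> : \sum_i' nrm nu i' * dlt i' i = nrm nu i.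
        rewrite (bigD1 i) //= /dlt eqxx mulr1 big1 ?addr0 // => i' ni.
        by rewrite eq_sym (negbTE ni) mulr0.
      ring.
    have jm : (nat_of_ord j == m) = false.
      by apply: contraNF njk => /eqP ej; apply/eqP/val_inj.
    by rewrite ltnS leq_eqVlt jm.
  have SY : S0 (fun i => \sum_(i' : I) (s * nrm nu i') * B i' i).
    rewrite /S0 exchange_big /=; rewrite big1 // => i' _.
    by rewrite -mulr_sumr SB mulr0.
  have L := (Htf hI).1 (nrm nu) (nrm_P hI Hnu) (hyb U nu) (HS U HU nu Hnu) k 1 A _ SA SY.
  have ML : mlin (@S0 R I) (Th I (nrm nu)) := (Htf hI).1 (nrm nu) (nrm_P hI Hnu).
  have TC : Tclosed (@S0 R I) by apply: S0_closed.
  have HSn := HS U HU nu Hnu.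
  rewrite e1 L upd_hyb (mlin_sum (T := @S0 R I)) //.
  by congr (_ + _); apply: eq_bigr => i' _; rewrite upd_hyb.
apply: (ct_eqD key Hmu).
apply: ct_add.
  apply: ct_mul; first exact: ct_cst.
  by apply: IH; apply: upd_T.
apply: ct_sum => i'; apply: ct_mul.
  by apply: ct_mul; [exact: ct_cst | exact: ct_nrm].
by apply: IH; apply: upd_T.
Qed.

Lemma Tht_tf (I : finType) : (0 < #|I|)%N -> tensor_field (@Mplus R I) (@anyvec R I) (@Tht I).
Proof.
move=> hI; split; first by move=> mu Hmu; exact: Tht_lin.
move=> V _ mu Hmu eps he.
have Z0 : forall j : 'I_n, S0 (fun _ : I => 0 : R) by move=> j; rewrite /S0 big1.
have [d hd H] := ct_hyb V hI Hmu n Z0 he.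
have E : forall nu : I -> R, (fun j : 'I_n => if (j < n)%N then prj nu (V j) else (fun _ => 0)) =
                 (fun j => prj nu (V j)).
  by move=> nu; apply: functional_extensionality => j; rewrite ltn_ord.
exists d => // nu Hnu Hc; have := H nu Hnu Hc; by rewrite !E.
Qed.

End WithThB.
End PartH.
Unset Implicit Arguments.

Theorem theorem4p3 (R : realType) (n : nat) :
  (* (a) families on M_+(I) *)
  (forall Th : forall I : finType, (I -> R) -> ('I_n -> I -> R) -> R,
     (forall I : finType, (0 < #|I|)%N ->
        tensor_field (@Mplus R I) (@anyvec R I) (Th I)) ->
     (congruent_family (@Mplus R) (@anyvec R) Th <->
      exists a : {set {set 'I_n}} -> R -> R,
        forall I : finType, (0 < #|I|)%N ->
        forall mu : I -> R, Mplus mu -> forall V : 'I_n -> I -> R,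
          Th I mu V = \sum_(P : {set {set 'I_n}} | partition P [set: 'I_n])
                        a P (mnorm mu) * tauP P mu V))
  /\
  (* (b) families on P_+(I), tangent vectors in S_0(I) *)
  (forall Th : forall I : finType, (I -> R) -> ('I_n -> I -> R) -> R,
     (forall I : finType, (0 < #|I|)%N ->
        tensor_field (@Pplus R I) (@S0 R I) (Th I)) ->
     (congruent_family (@Pplus R) (@S0 R) Th <->
      exists c : {set {set 'I_n}} -> R,
        forall I : finType, (0 < #|I|)%N ->
        forall mu : I -> R, Pplus mu -> forall V : 'I_n -> I -> R,
          (forall j, S0 (V j)) ->
          Th I mu V = \sum_(P : {set {set 'I_n}} | partition P [set: 'I_n]
                                   && [forall B in P, (1 < #|B|)%N])
                        c P * tauP P mu V)).
Proof.
split.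
- move=> Th Htf; split.
  + move=> Hcong.
    have [a Ha] := a_exists Htf Hcong.
    exists (fun P c => a c P) => I hI mu Hmu V.
    exact: (fml_all Htf Hcong Ha hI Hmu V).
  + case=> a Ha I I' hI hI' K [HK [kappa Hk]] Hpres mu Hmu V _.
    rewrite (Ha I' hI' _ (Hpres _ Hmu)) (Ha I hI _ Hmu) (mnorm_pushK HK Hmu).
    apply: eq_bigr => P _; by rewrite (tauP_cong V P HK Hk (Hpres _ Hmu)).
- move=> Th Htf; split.
  + move=> Hcong.
    have [a Ha] := a_exists (Tht_tf Htf) (Tht_cong Hcong).
    exists (fun P => a 1 P) => I hI mu [Hmu Hs] V HV.
    have := fml_all (Tht_tf Htf) (Tht_cong Hcong) Ha hI Hmu V.
    have e1 : nrm mu = mu.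
      by apply: functional_extensionality => i; rewrite /nrm Hs divr1.
    have e2 : (fun j => prj mu (V j)) = V.
      apply: functional_extensionality => j; apply: functional_extensionality => i.
      by have := HV j; rewrite /prj /S0 => ->; rewrite mul0r subr0.
    rewrite /Tht e1 e2 (mnorm_pos Hmu) Hs => ->.
    rewrite (bigID (fun P : {set {set 'I_n}} => [forall B in P, (1 < #|B|)%N])) /= [X in _ + X]big1 ?addr0 //.
    move=> P /andP[HP nall].
    move: nall; rewrite negb_forall => /existsP[B]; rewrite negb_imply -leqNgt => /andP[BP B1].
    have BN : B != set0 by apply: contraTneq BP => ->; rewrite (partition0 HP).
    have : #|B| == 1%N by rewrite eqn_leq B1 card_gt0.
    case/cards1P => j eB.
    have T0 : tau_block B mu V = 0.
      rewrite /tau_block eB cards1 subrr (eq_bigr (fun i => V j i)).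
        by have := HV j; rewrite /S0.
      by move=> i _; rewrite expr0z big_set1 mul1r.
    by rewrite /tauP (bigD1 B) //= T0 mul0r mulr0.
  + case=> c Hc I I' hI hI' K [HK [kappa Hk]] Hpres mu Hmu V HV.
    have Hpos : forall i', 0 < pushK K mu i' := (Hpres _ Hmu).1.
    have HKV : forall j, S0 (pushK K (V j)).
      by move=> j; rewrite /S0 sum_pushK //; exact: HV.
    rewrite (Hc I' hI' _ (Hpres _ Hmu) _ HKV) (Hc I hI _ Hmu _ HV).
    apply: eq_bigr => P _; by rewrite (tauP_cong V P HK Hk Hpos).
Qed.
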